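(* Let $\mathfrak{B}=\{\mathscr{M}^{KI},\mathscr{M}^{KK},\mathscr{A}^{KK},\mathscr{H}^{KK},\mathscr{S}\}$. Then the graph parameter $p_{\mathfrak{B}}$ is equivalent to each of $\widetilde{\Delta}$, $\mathsf{cdeg}$, $\max\{\mathsf{cideg},\widetilde{\omega}\}$, $\max\{\alpha^{\ast},\widetilde{\omega}\}$ and $\max\{\theta^{\ast},\widetilde{\omega}\}$; that is, for each such parameter $q$ there are functions $f,g\colon\mathbb{N}\to\mathbb{N}$ with $p_{\mathfrak{B}}(G)\le f(q(G))$ and $q(G)\le g(p_{\mathfrak{B}}(G))$ for every finite graph $G$.
   Context: Two vertices are equivalent if they lie in exactly the same maximal cliques. $\widetilde{G}$ is the clique-quotient graph (equivalence classes as vertices, adjacency inherited from representatives), $\widetilde{\Delta}(G)$ its maximum degree. $\widetilde{\omega}(G)$ is the maximum over maximal cliques $K$ of the number of equivalence classes meeting $K$; $\mathsf{cideg}(G)$ the maximum over vertices of the number of maximal cliques containing it; $\mathsf{cdeg}(G)$ the maximum over maximal cliques $K$ of the number of other maximal cliques intersecting $K$. $\alpha^{\ast}(G)=\max_v\alpha(G[N[v]])$, $\theta^{\ast}(G)=\max_v\theta(G[N[v]])$, $\theta$ the clique-cover number. For disjoint ordered sets $X=\{x_1,\dots,x_n\}$, $Y=\{y_1,\dots,y_n\}$ and a vertex $c$: $\mathscr{S}_n$ is the star with centre $c$ and $n$ leaves; $\mathscr{M}^{KI}_n$ has edges $x_iy_i$ and $X$ a clique, $Y$ independent; $\mathscr{M}^{KK}_n$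 has edges $x_iy_i$ and $X,Y$ cliques; $\mathscr{A}^{KK}_n$ has edges $x_iy_j$ ($i\ne j$) and $X,Y$ cliques; $\mathscr{H}^{KK}_n$ has edges $x_iy_j$ ($i\le j$) and $X,Y$ cliques. For a family $\mathfrak{F}$ of such sequences, $p_{\mathfrak{F}}(G)$ is the maximum $n$ such that some $\mathscr{X}\in\mathfrak{F}$ has $\mathscr{X}_n$ as an induced subgraph of $G$. *)

(* Defs.v *)
(* Finite simple graphs are (T : finType, e : rel T) with e
   symmetric and irreflexive. *)
From mathcomp Require Import all_boot.
Set Implicit Arguments. Unset Strict Implicit. Unset Printing Implicit Defensive.

Section GraphParams.
Variables (T : finType) (e : rel T).

Definition clique (K : {set T}) : bool :=
  [forall x in K, forall y in K, (x != y) ==> e x y].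

Definition maxclique (K : {set T}) : bool := maxset clique K.

Definition independent (S : {set T}) : bool :=
  [forall x in S, forall y in S, ~~ e x y].

Definition cequiv (u v : T) : bool :=
  [forall K : {set T}, maxclique K ==> ((u \in K) == (v \in K))].

Definition eqclass (v : T) : {set T} := [set u | cequiv u v].

(* vertex set of the clique-quotient graph \widetilde G *)
Definition classes : {set {set T}} := [set eqclass v | v in T].

Definition qadj (C D : {set T}) : bool :=
  (C != D) && [exists x in C, exists y in D, e x y].

Definition qdeg (C : {set T}) : nat := #|[set D in classes | qadj C D]|.

Definition tDelta : nat := \max_(C in classes) qdeg C.

Definition tomega : nat :=
  \max_(K : {set T} | maxclique K) #|[set D in classes | D :&: K != set0]|.

Definition cideg : nat :=
  \max_(v : T) #|[set K : {set T} | maxclique K & v \in K]|.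

Definition cdeg : nat :=
  \max_(K : {set T} | maxclique K)
     #|[set K' : {set T} | [&& maxclique K', K' != K & K :&: K' != set0]]|.

Definition cnbhd (v : T) : {set T} := v |: [set u | e v u].

Definition alpha_on (A : {set T}) : nat :=
  \max_(S : {set T} | (S \subset A) && independent S) #|S|.

(* The singleton cover has size
   #|A|, so #|A| is a harmless initial value for the minimum. *)
Definition theta_on (A : {set T}) : nat :=
  \big[minn/#|A|]_(P : {set {set T}} |
        [forall K in P, clique K && (K \subset A)] && (cover P == A)) #|P|.

Definition alpha_star : nat := \max_(v : T) alpha_on (cnbhd v).
Definition theta_star : nat := \max_(v : T) theta_on (cnbhd v).

Definition induced (V : finType) (a : rel V) : bool :=
  [exists f : {ffun V -> T},
     injectiveb f && [forall x, forall y, e (f x) (f y) == a x y]].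

End GraphParams.

Record gseq := GSeq { gV : nat -> finType ; gA : forall n, rel (gV n) }.

(* vertices x_1..x_n are inl i, y_1..y_n are inr i (i : 'I_n) *)
Definition XY (n : nat) : finType := ('I_n + 'I_n)%type.

Definition adjMKI n : rel (XY n) := fun a b =>
  match a, b with
  | inl i, inl j => i != j
  | inr _, inr _ => false
  | inl i, inr j | inr j, inl i => i == j
  end.

Definition adjMKK n : rel (XY n) := fun a b =>
  match a, b with
  | inl i, inl j | inr i, inr j => i != j
  | inl i, inr j | inr j, inl i => i == j
  end.

Definition adjAKK n : rel (XY n) := fun a b =>
  match a, b with
  | inl i, inl j | inr i, inr j => i != j
  | inl i, inr j | inr j, inl i => i != j
  end.

Definition adjHKK n : rel (XY n) := fun a b =>
  match a, b with
  | inl i, inl j | inr i, inr j => i != j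
  | inl i, inr j | inr j, inl i => (i <= j)%N
  end.

(* star: centre None, leaves Some i *)
Definition starV (n : nat) : finType := option 'I_n.
Definition adjS n : rel (starV n) := fun a b =>
  match a, b with
  | None, Some _ | Some _, None => true
  | _, _ => false
  end.

Definition MKI := GSeq adjMKI.
Definition MKK := GSeq adjMKK.
Definition AKK := GSeq adjAKK.
Definition HKK := GSeq adjHKK.
Definition Star := GSeq adjS.

(* p_F(G): the largest n such that some X in F has X_n as induced subgraph.
   Every graph of the families used has at least n vertices, so the maximum
   may be restricted to n <= #|T|. *)
Definition pF (F : seq gseq) (T : finType) (e : rel T) : nat :=
  \max_(n < #|T|.+1 | has (fun X : gseq => induced e (@gA X n)) F) (n : nat).

Definition frakB : seq gseq := [:: MKI; MKK; AKK; HKK; Star].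

Definition pB (T : finType) (e : rel T) : nat := pF frakB e.

Definition param_equiv (p q : forall T : finType, rel T -> nat) : Prop :=
  exists f g : nat -> nat, forall (T : finType) (e : rel T),
    symmetric e -> irreflexive e ->
    (p T e <= f (q T e))%N /\ (q T e <= g (p T e))%N.

(* Main.v *)
Require Import Defs.
From mathcomp Require Import all_boot zify.
Set Implicit Arguments. Unset Strict Implicit. Unset Printing Implicit Defensive.


Definition homog (U : finType) (r : rel U) (b : bool) (A : {set U}) :=
  {in A &, forall x y, x != y -> r x y = b}.

Lemma ramsey (U : finType) (r : rel U) : symmetric r ->
  forall a b (S : {set U}), 2 ^ (a + b) <= #|S| ->
  exists2 A : {set U}, A \subset S &
    ((a <= #|A| /\ homog r true A) \/ (b <= #|A| /\ homog r false A)).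
Proof.
move=> rs; elim=> [|a IHa] b S hS.
  by exists set0; rewrite ?sub0set //; left; split => // x y; rewrite inE.
elim: b S hS => [|b IHb] S hS.
  by exists set0; rewrite ?sub0set //; right; split => // x y; rewrite inE.
have [x xS] : exists x, x \in S.
  apply/set0Pn; apply: contraTneq hS => ->; rewrite cards0 -ltnNge expn_gt0.
  by [].
pose B := [set y | r x y].
pose N := (S :\ x) :&: B; pose M := (S :\ x) :\: B.
have cNM : #|N| + #|M| = #|S| - 1 by rewrite cardsID (cardsD1 x S) xS add1n subn1.
have memN : forall y, y \in N -> [/\ y != x, y \in S & r x y].
  by move=> y; rewrite in_setI in_setD1 inE => /andP[/andP[]].
have memM : forall y, y \in M -> [/\ y != x, y \in S & ~~ r x y].
  by move=> y; rewrite in_setD in_setD1 inE => /andP[? /andP[]].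
have xN : x \notin N by apply/negP => /memN[]; rewrite eqxx.
have xM : x \notin M by apply/negP => /memM[]; rewrite eqxx.
have NS : N \subset S by apply/subsetP => y /memN[].
have MS : M \subset S by apply/subsetP => y /memM[].
have rN : forall y, y \in N -> r x y by move=> y /memN[].
have rM : forall y, y \in M -> ~~ r x y by move=> y /memM[].
have [hN|hN] := leqP (2 ^ (a + b.+1)) #|N|.
  case: (IHa b.+1 N hN) => A AN [[ha hA]|[hb hA]].
    exists (x |: A).
      by apply/subsetP => y; rewrite in_setU1 => /predU1P[->//|/(subsetP AN)/(subsetP NS)].
    left; split.
      by rewrite cardsU1 (contra (subsetP AN x)) // add1n ltnS.
    move=> y z; rewrite !in_setU1 => /predU1P[->|yA] /predU1P[->|zA]; rewrite ?eqxx //.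
    - by move=> _; apply: rN; apply: (subsetP AN).
    - by move=> _; rewrite rs; apply: rN; apply: (subsetP AN).
    - exact: hA.
  by exists A; [exact: subset_trans AN NS | right].
have [hM|hM] := leqP (2 ^ (a.+1 + b)) #|M|.
  case: (IHb M hM) => A AM [[ha hA]|[hb hA]].
    by exists A; [exact: subset_trans AM MS | left].
  exists (x |: A).
    by apply/subsetP => y; rewrite in_setU1 => /predU1P[->//|/(subsetP AM)/(subsetP MS)].
  right; split.
    by rewrite cardsU1 (contra (subsetP AM x)) // add1n ltnS.
  move=> y z; rewrite !in_setU1 => /predU1P[->|yA] /predU1P[->|zA]; rewrite ?eqxx //.
  - by move=> _; apply/negbTE; apply: rM; apply: (subsetP AM).
  - by move=> _; rewrite rs; apply/negbTE; apply: rM; apply: (subsetP AM).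
  - exact: hA.
exfalso; move: hS hN hM cNM.
rewrite addnS addSn expnS.
have -> : a + b.+1 = (a + b).+1 by rewrite addnS.
rewrite expnS; move: (2 ^ (a + b)) => p; lia.
Qed.

Section Basic.
Variables (T : finType) (e : rel T).
Hypothesis esy : symmetric e.
Hypothesis eirr : irreflexive e.

Lemma cliqueP (K : {set T}) :
  reflect (forall x y, x \in K -> y \in K -> x != y -> e x y) (clique e K).
Proof.
apply: (iffP forallP) => [H x y xK yK nxy|H x].
  by move: (H x); rewrite xK /= => /forallP/(_ y); rewrite yK nxy.
apply/implyP=> xK; apply/forallP=> y; apply/implyP=> yK; apply/implyP; exact: H.
Qed.

Lemma maxclique_clique K : maxclique e K -> clique e K.
Proof. exact: maxsetp. Qed.

Lemma maxclique_adj K x y : maxclique e K -> x \in K -> y \in K -> x != y -> e x y.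
Proof. by move/maxclique_clique/cliqueP; apply. Qed.

Lemma maxclique_out K x : maxclique e K -> x \notin K ->
  exists2 z, z \in K & (z != x) && ~~ e z x.
Proof.
move=> mK xK; apply/exists_inP; apply: contraR xK => /exists_inP H.
have H' : forall z, z \in K -> z != x -> e z x.
  move=> z zK nzx; apply/negPn/negP => nz; apply: H; exists z => //; by rewrite nzx.
have cl : clique e (x |: K).
  apply/cliqueP => a b; rewrite !in_setU1.
  case/predU1P => [->|aK]; case/predU1P => [->|bK]; rewrite ?eqxx //.
  - by move=> nxb; rewrite esy; apply: H' => //; rewrite eq_sym.
  - by move=> nax; apply: (H' a aK nax).
  - exact: (maxclique_adj mK aK bK).
by rewrite -(maxsetsup mK cl (subsetUr _ _)) setU11.
Qed.

Lemma clique_ext Q : clique e Q -> exists2 K, maxclique e K & Q \subset K.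
Proof. by move=> cQ; case: (maxset_exists cQ) => K mK sQK; exists K. Qed.

Lemma clique1 x : clique e [set x].
Proof. by apply/cliqueP=> a b /set1P-> /set1P->; rewrite eqxx. Qed.

Lemma clique2 x y : e x y -> clique e [set x; y].
Proof.
move=> exy; apply/cliqueP=> a b /set2P[]-> /set2P[]->; rewrite ?eqxx // => _.
by rewrite esy.
Qed.

Lemma cequivP u v :
  reflect (forall K, maxclique e K -> (u \in K) = (v \in K)) (cequiv e u v).
Proof.
apply: (iffP forallP) => [H K mK|H K]; first by move: (H K); rewrite mK /= => /eqP.
by apply/implyP=> mK; rewrite (H K mK).
Qed.

Lemma cequiv_refl u : cequiv e u u.
Proof. by apply/cequivP. Qed.

Lemma cequiv_sym u v : cequiv e u v = cequiv e v u.
Proof. by apply/cequivP/cequivP => H K mK; rewrite H. Qed.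

Lemma cequiv_trans u v w : cequiv e u v -> cequiv e v w -> cequiv e u w.
Proof. by move=> /cequivP H1 /cequivP H2; apply/cequivP => K mK; rewrite H1 // H2. Qed.

Lemma not_cequiv u v z : e u z -> z != v -> ~~ e z v -> ~~ cequiv e u v.
Proof.
move=> euz nzv nezv; case: (@clique_ext [set u; z]); first exact: clique2.
move=> K mK sK; apply/negP => /cequivP/(_ K mK).
rewrite (subsetP sK u) ?set21 // => /esym vK.
by move: nezv; rewrite (maxclique_adj mK) // (subsetP sK z) // set22.
Qed.

Lemma in_eqclass u v : (u \in eqclass e v) = cequiv e u v.
Proof. by rewrite inE. Qed.

Lemma eqclass_eq u v : (eqclass e u == eqclass e v) = cequiv e u v.
Proof.
apply/eqP/idP => [H|H].
  by rewrite -in_eqclass -H in_eqclass cequiv_refl.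
apply/setP => w; rewrite !in_eqclass; apply/idP/idP => Hw.
  exact: cequiv_trans H.
by apply: cequiv_trans Hw _; rewrite cequiv_sym.
Qed.

Lemma classesP C : reflect (exists v, C = eqclass e v) (C \in classes e).
Proof. by apply: (iffP imsetP) => [[v _ ->]|[v ->]]; exists v. Qed.


Lemma cequiv_adj x x' u : cequiv e x x' -> e x u -> u != x' -> e x' u.
Proof.
move=> /cequivP H exu nux; case: (@clique_ext [set x; u]); first exact: clique2.
move=> M mM sM; have x'M : x' \in M by rewrite -(H M mM) (subsetP sM) ?set21.
by apply: (maxclique_adj mM x'M); rewrite ?(subsetP sM) ?set22 // eq_sym.
Qed.

Lemma tomega_ge (Q : {set T}) : clique e Q ->
  {in Q &, forall u v, cequiv e u v -> u = v} -> #|Q| <= tomega e.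
Proof.
move=> cQ inj; case: (clique_ext cQ) => K mK sQK.
apply: leq_trans (leq_bigmax_cond _ mK).
rewrite -(card_in_imset (f := eqclass e)); last first.
  by move=> u v uQ vQ /eqP; rewrite eqclass_eq; apply: inj.
apply: subset_leq_card; apply/subsetP => C /imsetP[u uQ ->].
rewrite inE; apply/andP; split; first by apply/classesP; exists u.
by apply/set0Pn; exists u; rewrite inE in_eqclass cequiv_refl (subsetP sQK).
Qed.

Lemma inducedP (V : finType) (a : rel V) :
  reflect (exists f : V -> T, injective f /\ forall x y, e (f x) (f y) = a x y)
          (induced e a).
Proof.
apply: (iffP existsP) => [[f /andP[/injectiveP fi /forallP H]]|[f [fi H]]].
  by exists f; split => // x y; move/forallP: (H x) => /(_ y)/eqP.
exists [ffun x => f x]; apply/andP; split.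
  by apply/injectiveP => x y; rewrite !ffunE; apply: fi.
by apply/forallP => x; apply/forallP => y; rewrite !ffunE H.
Qed.

Lemma induced_card (V : finType) (a : rel V) : induced e a -> #|V| <= #|T|.
Proof. by case/inducedP => f [fi _]; apply: leq_card fi. Qed.

Lemma induced_XY n (a : rel (XY n)) (al be : 'I_n -> T) :
  injective al -> injective be -> (forall i j, al i != be j) ->
  (forall i j, e (al i) (al j) = a (inl i) (inl j)) ->
  (forall i j, e (be i) (be j) = a (inr i) (inr j)) ->
  (forall i j, e (al i) (be j) = a (inl i) (inr j)) ->
  (forall i j, a (inr j) (inl i) = a (inl i) (inr j)) -> induced e a.
Proof.
move=> ai bi ab Haa Hbb Hab Hsym; apply/inducedP.
exists (fun z : XY n => match (z : ('I_n + 'I_n)%type) with inl i => al i | inr j => be j end); split.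
  case=> [i|i] [j|j] //=; first by move/ai->.
  - by move=> E; move: (ab i j); rewrite E eqxx.
  - by move=> E; move: (ab j i); rewrite E eqxx.
  - by move/bi->.
case=> [i|i] [j|j] //=; by rewrite ?Hsym -?Hab // esy.
Qed.

Lemma induced_star n (c : T) (be : 'I_n -> T) :
  injective be -> (forall j, c != be j) -> (forall j, e c (be j)) ->
  (forall i j, ~~ e (be i) (be j)) -> induced e (@adjS n).
Proof.
move=> bi cb ecb nbb; apply/inducedP.
exists (fun z : starV n => match (z : option 'I_n) with None => c | Some j => be j end); split.
  case=> [i|] [j|] //=; first by move/bi->.
  - by move=> E; move: (cb i); rewrite E eqxx.
  - by move=> E; move: (cb j); rewrite E eqxx.
case=> [i|] [j|] //=; rewrite ?eirr ?ecb //; first exact: negbTE.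
by rewrite esy ecb.
Qed.


Lemma pB_le m :
  (forall n, has (fun X : gseq => induced e (@gA X n)) frakB -> n <= m) -> pB e <= m.
Proof. by move=> H; apply/bigmax_leqP => i /H. Qed.

Lemma pB_ge n : has (fun X : gseq => induced e (@gA X n)) frakB -> n <= pB e.
Proof.
move=> H; have nT : n < #|T|.+1.
  rewrite ltnS; move: H => /=.
  have h1 : forall a : rel (XY n), induced e a -> n <= #|T|.
    move=> a /induced_card; apply: leq_trans.
    by rewrite card_sum card_ord leq_addr.
  have h2 : forall a : rel (starV n), induced e a -> n <= #|T|.
    move=> a /induced_card; apply: leq_trans.
    by rewrite card_option card_ord.
  by rewrite orbF; case/or4P => [|||/orP[]]; [exact: h1|exact: h1|exact: h1|exact: h1|exact: h2].
by apply: (leq_bigmax_cond (Ordinal nT)).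
Qed.

Lemma pB_star n : induced e (@adjS n) -> n <= pB e.
Proof. by move=> H; apply: pB_ge => /=; rewrite H !orbT. Qed.
Lemma pB_MKI n : induced e (@adjMKI n) -> n <= pB e.
Proof. by move=> H; apply: pB_ge => /=; rewrite H. Qed.
Lemma pB_MKK n : induced e (@adjMKK n) -> n <= pB e.
Proof. by move=> H; apply: pB_ge => /=; rewrite H !orbT. Qed.
Lemma pB_AKK n : induced e (@adjAKK n) -> n <= pB e.
Proof. by move=> H; apply: pB_ge => /=; rewrite H !orbT. Qed.
Lemma pB_HKK n : induced e (@adjHKK n) -> n <= pB e.
Proof. by move=> H; apply: pB_ge => /=; rewrite H !orbT. Qed.


Lemma XY_tomega n (a : rel (XY n)) :
  (forall i j, a (inl i) (inl j) = (i != j)) ->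
  (forall i j, a (inr j) (inl i) = a (inl i) (inr j)) ->
  (forall i j : 'I_n, i < j -> exists k, a (inl i) (inr k) && ~~ a (inl j) (inr k)) ->
  induced e a -> n <= tomega e.
Proof.
move=> Hll Hsym Hsep /inducedP[f [fi fe]].
have fli : injective (fun i => f (inl i)) by move=> i j /fi [].
have key : forall i j : 'I_n, i < j -> ~~ cequiv e (f (inl i)) (f (inl j)).
  move=> i j lij; case: (Hsep i j lij) => k /andP[a1 a2].
  apply: (@not_cequiv _ _ (f (inr k))); first by rewrite fe.
    by apply/eqP => /fi.
  by rewrite fe Hsym a2.
have := @tomega_ge [set f (inl i) | i : 'I_n].
rewrite card_imset // card_ord; apply.
  apply/cliqueP => x y /imsetP[i _ ->] /imsetP[j _ ->] nxy.
  by rewrite fe Hll; apply: contraNneq nxy => ->.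
move=> x y /imsetP[i _ ->] /imsetP[j _ ->] ce.
case: (ltngtP i j) => [lij|lji|/val_inj -> //].
  by move: (key _ _ lij); rewrite ce.
by move: (key _ _ lji); rewrite cequiv_sym ce.
Qed.

Lemma MKI_tomega n : induced e (@adjMKI n) -> n <= tomega e.
Proof.
apply: XY_tomega => //= i j lij; exists i; rewrite eqxx /=.
by apply: contraTneq lij => ->; rewrite ltnn.
Qed.
Lemma MKK_tomega n : induced e (@adjMKK n) -> n <= tomega e.
Proof.
apply: XY_tomega => //= i j lij; exists i; rewrite eqxx /=.
by apply: contraTneq lij => ->; rewrite ltnn.
Qed.
Lemma AKK_tomega n : induced e (@adjAKK n) -> n <= tomega e.
Proof.
apply: XY_tomega => //= i j lij; exists j; rewrite eqxx /= andbT.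
by apply: contraTneq lij => ->; rewrite ltnn.
Qed.
Lemma HKK_tomega n : induced e (@adjHKK n) -> n <= tomega e.
Proof.
apply: XY_tomega => //= i j lij; exists i; rewrite leqnn /= -ltnNge //.
Qed.

Lemma star_alpha n : induced e (@adjS n) -> n <= alpha_star e.
Proof.
move=> /inducedP[f [fi fe]].
have fsi : injective (fun i => f (Some i)) by move=> i j /fi [].
apply: leq_trans (leq_bigmax (f None)).
apply: (@leq_trans #|[set f (Some i) | i : 'I_n]|); first by rewrite card_imset // card_ord.
apply: (leq_bigmax_cond [set f (Some i) | i : 'I_n]); apply/andP; split.
  apply/subsetP => x /imsetP[i _ ->]; rewrite /cnbhd !inE fe /=.
  by rewrite orbT.
apply/forallP => x; apply/implyP => /imsetP[i _ ->].
by apply/forallP => y; apply/implyP => /imsetP[j _ ->]; rewrite fe.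
Qed.

Lemma pB_upper : pB e <= maxn (alpha_star e) (tomega e).
Proof.
apply: pB_le => n /=; rewrite orbF.
case/or4P => [H|H|H|/orP[H|H]].
- by rewrite leq_max (MKI_tomega H) orbT.
- by rewrite leq_max (MKK_tomega H) orbT.
- by rewrite leq_max (AKK_tomega H) orbT.
- by rewrite leq_max (HKK_tomega H) orbT.
- by rewrite leq_max (star_alpha H).
Qed.


Lemma not_cequiv_nonadj u v : u != v -> ~~ e u v -> ~~ cequiv e u v.
Proof.
move=> nuv neuv; case: (@clique_ext [set u]); first exact: clique1.
move=> K mK sK; apply/negP => /cequivP/(_ K mK).
rewrite (subsetP sK u) ?set11 // => /esym vK.
by move: neuv; rewrite (maxclique_adj mK) // (subsetP sK u) ?set11.
Qed.

Lemma class_mem C u : C \in classes e -> u \in C -> C = eqclass e u.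
Proof.
case/classesP => x -> ux; apply/eqP; rewrite eq_sym eqclass_eq.
by rewrite -in_eqclass.
Qed.

Lemma sat_sub M x : maxclique e M -> x \in M -> eqclass e x \subset M.
Proof. by move=> mM xM; apply/subsetP => y; rewrite in_eqclass => /cequivP ->. Qed.

Lemma sat_meet M x : maxclique e M -> (eqclass e x :&: M != set0) = (x \in M).
Proof.
move=> mM; apply/set0Pn/idP => [[y /setIP[]]|xM].
  by rewrite in_eqclass => /cequivP -> .
by exists x; rewrite inE in_eqclass cequiv_refl xM.
Qed.

Lemma bigmin_le (I : finType) (P : pred I) (F : I -> nat) x i0 :
  P i0 -> \big[minn/x]_(i | P i) F i <= F i0.
Proof.
move=> Pi; rewrite -big_filter.
have : i0 \in [seq i <- index_enum I | P i] by rewrite mem_filter Pi mem_index_enum.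
elim: [seq i <- index_enum I | P i] => // a s IH; rewrite inE big_cons.
case/predU1P => [<-|i_s]; first exact: geq_minl.
exact: leq_trans (geq_minr _ _) (IH i_s).
Qed.

Lemma card_bigcup_le (U I : finType) (A : {set I}) (F : I -> {set U}) :
  #|\bigcup_(i in A) F i| <= \sum_(i in A) #|F i|.
Proof.
apply: (big_ind2 (fun (X : {set U}) n => #|X| <= n)); first by rewrite cards0.
  move=> X1 n1 X2 n2 h1 h2; apply: leq_trans (leq_card_setU _ _) _.
  exact: leq_add.
by [].
Qed.

Definition Mv v := [set K | maxclique e K & v \in K].

Lemma Mv_cideg v : #|Mv v| <= cideg e.
Proof. exact: (leq_bigmax v). Qed.

Lemma Mv_sub v K : K \in Mv v -> K \subset cnbhd e v.
Proof.
rewrite inE => /andP[mK vK]; apply/subsetP => u uK; rewrite /cnbhd !inE.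
case: eqP => //= /eqP nuv; apply: (maxclique_adj mK) => //; by rewrite eq_sym.
Qed.

Lemma Mv_ex v u : u \in cnbhd e v -> exists2 K, K \in Mv v & u \in K.
Proof.
rewrite /cnbhd !inE => /predU1P[->|evu].
  case: (@clique_ext [set v]); first exact: clique1.
  by move=> K mK sK; exists K; rewrite /Mv ?inE ?mK ?(subsetP sK) ?set11.
case: (@clique_ext [set v; u]); first exact: clique2.
by move=> K mK sK; exists K; rewrite /Mv ?inE ?mK ?(subsetP sK) ?set21 ?set22.
Qed.

Lemma alpha_theta A : alpha_on e A <= theta_on e A.
Proof.
apply/bigmax_leqP => S /andP[sSA indS].
have indP : forall x y, x \in S -> y \in S -> ~~ e x y.
  by move=> x y xS yS; move/forallP: indS => /(_ x); rewrite xS => /forallP/(_ y); rewrite yS.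
apply: (big_ind (fun m => #|S| <= m)); first exact: subset_leq_card.
  by move=> m1 m2 h1 h2; rewrite leq_min h1 h2.
move=> P /andP[/forallP HP /eqP cov].
pose g s := odflt set0 [pick K in P | s \in K].
have gP : forall s, s \in S -> g s \in P /\ s \in g s.
  move=> s sS; have : s \in cover P by rewrite cov (subsetP sSA).
  case/bigcupP => K KP sK; rewrite /g; case: pickP => [K' /andP[]|] //.
  by move/(_ K); rewrite KP sK.
rewrite -(@card_in_imset _ _ g); last first.
  move=> s s' sS s'S E; apply/eqP; apply: contraT => nss.
  have [gs1 gs2] := gP s sS; have [gs1' gs2'] := gP s' s'S.
  move: (HP (g s)); rewrite gs1 => /andP[/cliqueP cl _].
  by move: (indP s s' sS s'S); rewrite (cl s s') // E.
apply: subset_leq_card; apply/subsetP => K /imsetP[s sS ->]; by case: (gP s sS).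
Qed.

Lemma alpha_theta_star : alpha_star e <= theta_star e.
Proof.
apply/bigmax_leqP => v _; apply: leq_trans (alpha_theta _) (leq_bigmax v).
Qed.

Lemma theta_cideg : theta_star e <= cideg e.
Proof.
apply/bigmax_leqP => v _; apply: leq_trans (Mv_cideg v).
apply: bigmin_le; apply/andP; split.
  by apply/forallP => K; apply/implyP => KM; rewrite Mv_sub // andbT; move: KM; rewrite inE => /andP[/maxclique_clique].
apply/eqP/setP => u; apply/bigcupP/idP => [[K KM uK]|].
  by rewrite (subsetP (Mv_sub KM)).
by case/Mv_ex => K KM uK; exists K.
Qed.


Lemma qdeg_tDelta C : C \in classes e -> qdeg e C <= tDelta e.
Proof. by move=> HC; apply: (leq_bigmax_cond C HC). Qed.

Lemma indepP S : independent e S -> forall x y, x \in S -> y \in S -> ~~ e x y.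
Proof.
by move=> indS x y xS yS; move/forallP: indS => /(_ x); rewrite xS => /forallP/(_ y); rewrite yS.
Qed.

Lemma alpha_tDelta : alpha_star e <= (tDelta e).+1.
Proof.
apply/bigmax_leqP => v _; apply/bigmax_leqP => S /andP[sSN /indepP indS].
case: (leqP #|S| 1) => [h|gt1]; first exact: leq_trans h _.
have vS : v \notin S.
  apply/negP => vS; move: gt1; case/card_gt1P => x [y [xS yS nxy]].
  have hx : x = v.
    apply/eqP; apply: contraT => nxv; move: (subsetP sSN x xS).
    rewrite /cnbhd !inE (negbTE nxv) /= => evx; by move: (indS v x vS xS); rewrite evx.
  have hy : y = v.
    apply/eqP; apply: contraT => nxv; move: (subsetP sSN y yS).
    rewrite /cnbhd !inE (negbTE nxv) /= => evx; by move: (indS v y vS yS); rewrite evx.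
  by move: nxy; rewrite hx hy eqxx.
have adj : forall s, s \in S -> e v s.
  move=> s sS; move: (subsetP sSN s sS); rewrite /cnbhd !inE.
  by case/predU1P => // E; move: vS; rewrite -E sS.
apply: (leq_trans _ (leqnSn _)); apply: (@leq_trans (qdeg e (eqclass e v))); last first.
  by apply: qdeg_tDelta; apply/classesP; exists v.
rewrite -(@card_in_imset _ _ (eqclass e)); last first.
  move=> s s' sS s'S /eqP; rewrite eqclass_eq => ce; apply/eqP; apply: contraT => nss.
  by move: (not_cequiv_nonadj nss (indS s s' sS s'S)); rewrite ce.
apply: subset_leq_card; apply/subsetP => D /imsetP[s sS ->]; rewrite inE.
apply/andP; split; first by apply/classesP; exists s.
apply/andP; split; last first.
  by apply/exists_inP; exists v; rewrite ?in_eqclass ?cequiv_refl //; apply/exists_inP; exists s; rewrite ?in_eqclass ?cequiv_refl ?adj.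
rewrite eqclass_eq; move: gt1; case/card_gt1P => x [y [xS yS nxy]].
have [s2 [s2S ns2]] : exists s2, s2 \in S /\ s2 != s.
  case: (eqVneq x s) => [exs|nxs]; last by exists x.
  by exists y; split => //; rewrite -exs eq_sym.
apply: (@not_cequiv _ _ s2); first exact: adj.
  by [].
exact: indS.
Qed.

Lemma tomega_tDelta : tomega e <= (tDelta e).+1.
Proof.
apply/bigmax_leqP => K mK.
case: (set_0Vmem [set D in classes e | D :&: K != set0]) => [->|[D0]]; first by rewrite cards0.
rewrite inE => /andP[D0c /set0Pn[u0 /setIP[u0D0 u0K]]].
have HD0 := class_mem D0c u0D0; subst D0.
apply: leq_trans (_ : #|eqclass e u0 |: [set D in classes e | qadj e (eqclass e u0) D]| <= _).
  apply: subset_leq_card; apply/subsetP => D; rewrite !inE => /andP[Dc /set0Pn[u /setIP[uD uK]]].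
  rewrite (class_mem Dc uD) eqclass_eq.
  have Dc2 : eqclass e u \in classes e by apply/classesP; exists u.
  rewrite Dc2 /=.
  case: (boolP (cequiv e u u0)) => //= nce; apply/andP; split.
    by rewrite eqclass_eq cequiv_sym.
  apply/exists_inP; exists u0; first by rewrite in_eqclass cequiv_refl.
  apply/exists_inP; exists u; first by rewrite in_eqclass cequiv_refl.
  apply: (maxclique_adj mK) => //; apply: contraNneq nce => ->; exact: cequiv_refl.
rewrite cardsU1 -add1n; apply: leq_add; first exact: leq_b1.
by apply: qdeg_tDelta; apply/classesP; exists u0.
Qed.


Definition SK K := [set K' : {set T} | [&& maxclique e K', K' != K & K :&: K' != set0]].
Definition Acl K := [set D in classes e | D :&: K != set0].

Lemma SK_cdeg K : maxclique e K -> #|SK K| <= cdeg e.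
Proof. by move=> mK; apply: (leq_bigmax_cond K mK). Qed.

Lemma Acl_tomega K : maxclique e K -> #|Acl K| <= tomega e.
Proof. by move=> mK; apply: (leq_bigmax_cond K mK). Qed.

Lemma cequivN u v : ~~ cequiv e u v ->
  exists2 M, maxclique e M & (u \in M) != (v \in M).
Proof.
move=> /forallPn[M]; rewrite negb_imply => /andP[mM H]; by exists M.
Qed.

Lemma cideg_cdeg : cideg e <= (cdeg e).+1.
Proof.
apply/bigmax_leqP => v _; change (#|Mv v| <= (cdeg e).+1).
case: (set_0Vmem (Mv v)) => [->|[K0 K0M]]; first by rewrite cards0.
have := K0M; rewrite inE => /andP[mK0 vK0].
apply: (@leq_trans #|K0 |: SK K0|).
  apply: subset_leq_card; apply/subsetP => M MM; rewrite !inE.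
  case: eqP => //= /eqP nMK; move: MM; rewrite inE => /andP[mM vM].
  by rewrite mM /=; apply/set0Pn; exists v; rewrite inE vK0.
by rewrite cardsU1 -add1n; apply: leq_add; [exact: leq_b1 | exact: SK_cdeg].
Qed.

Lemma tomega_cdeg : tomega e <= 2 ^ cdeg e.
Proof.
apply/bigmax_leqP => K mK; rewrite -/(Acl K).
pose phi (D : {set T}) := [set M in SK K | D :&: M != set0].
rewrite -(@card_in_imset _ _ phi); last first.
  move=> D1 D2; rewrite !inE => /andP[D1c /set0Pn[u1 /setIP[u1D1 u1K]]].
  move=> /andP[D2c /set0Pn[u2 /setIP[u2D2 u2K]]] E.
  rewrite (class_mem D1c u1D1) (class_mem D2c u2D2) in E *.
  apply/eqP; rewrite eqclass_eq; apply: contraT => /cequivN[M mM H].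
  have MS : M \in SK K.
    rewrite inE mM /=; apply/andP; split.
      by apply: contraNneq H => ->; rewrite u1K u2K.
    apply/set0Pn; move: H; case: (boolP (u1 \in M)) => u1M.
      by exists u1; rewrite inE u1K.
    by rewrite eq_sym => u2M; exists u2; rewrite inE u2K; move: u2M; case: (u2 \in M).
  move/setP: E => /(_ M); rewrite /phi !inE; move: MS; rewrite inE => -> /=; rewrite !sat_meet // => E.
  by move: H; rewrite E eqxx.
apply: (@leq_trans #|powerset (SK K)|).
  apply: subset_leq_card; apply/subsetP => X /imsetP[D _ ->].
  by rewrite inE; apply/subsetP => M; rewrite inE => /andP[].
by rewrite card_powerset leq_pexp2l // SK_cdeg.
Qed.

Lemma cdeg_le : cdeg e <= tomega e * cideg e.
Proof.
apply/bigmax_leqP => K mK.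
apply: (@leq_trans #|\bigcup_(D in Acl K) [set M | maxclique e M & D :&: M != set0]|).
  apply: subset_leq_card; apply/subsetP => M; rewrite inE => /and3P[mM _ /set0Pn[u /setIP[uK uM]]].
  apply/bigcupP; exists (eqclass e u).
    rewrite inE; apply/andP; split; first by apply/classesP; exists u.
    by apply/set0Pn; exists u; rewrite inE in_eqclass cequiv_refl.
  by rewrite inE mM sat_meet.
apply: (leq_trans (card_bigcup_le _ _)).
apply: (@leq_trans (\sum_(D in Acl K) cideg e)).
  apply: leq_sum => D; rewrite inE => /andP[/classesP[x ->] _].
  apply: leq_trans (Mv_cideg x); apply: subset_leq_card; apply/subsetP => M.
  by rewrite !inE => /andP[mM]; rewrite sat_meet // mM.
by rewrite sum_nat_const leq_mul2r Acl_tomega ?orbT.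
Qed.

Lemma cideg_tDelta : cideg e <= 2 ^ tDelta e.
Proof.
apply/bigmax_leqP => v _; change (#|Mv v| <= 2 ^ tDelta e).
pose Nbr := [set D in classes e | qadj e (eqclass e v) D].
pose psi (M : {set T}) := [set D in Nbr | D \subset M].
have half : forall M1 M2, M1 \in Mv v -> M2 \in Mv v -> psi M1 = psi M2 -> M1 \subset M2.
  move=> M1 M2; rewrite !inE => /andP[mM1 vM1] /andP[mM2 vM2] E.
  apply/subsetP => u uM1; case: (boolP (cequiv e u v)) => [/cequivP ->//|nce].
  have : eqclass e u \in psi M1.
    rewrite !inE sat_sub // andbT; apply/andP; split; first by apply/classesP; exists u.
    apply/andP; split; first by rewrite eqclass_eq cequiv_sym.
    apply/exists_inP; exists v; first by rewrite in_eqclass cequiv_refl.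
    apply/exists_inP; exists u; first by rewrite in_eqclass cequiv_refl.
    apply: (maxclique_adj mM1) => //; apply: contraNneq nce => ->; exact: cequiv_refl.
  rewrite E inE => /andP[_ /subsetP]; apply; by rewrite in_eqclass cequiv_refl.
rewrite -(@card_in_imset _ _ psi); last first.
  by move=> M1 M2 h1 h2 E; apply/eqP; rewrite eqEsubset !half.
apply: (@leq_trans #|powerset Nbr|).
  apply: subset_leq_card; apply/subsetP => X /imsetP[M _ ->].
  by rewrite inE; apply/subsetP => D; rewrite inE => /andP[].
rewrite card_powerset leq_pexp2l // qdeg_tDelta //.
by apply/classesP; exists v.
Qed.


Lemma star_of_indep v (A : {set T}) :
  A \subset [set u | e v u] -> homog e false A -> #|A| <= pB e.
Proof.
move=> sA hA; apply: pB_star.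
apply: (@induced_star _ v (fun i => enum_val i)).
- exact: enum_val_inj.
- move=> j; apply/eqP => E; move: (subsetP sA _ (enum_valP j)).
  by rewrite inE -E eirr.
- by move=> j; move: (subsetP sA _ (enum_valP j)); rewrite inE.
- move=> i j; case: (eqVneq i j) => [->|nij]; first by rewrite eirr.
  rewrite hA ?enum_valP //; apply: contra nij => /eqP /enum_val_inj ->.
  by [].
Qed.

Lemma clique_inequiv_tomega v (A : {set T}) :
  A \subset [set u | e v u] -> homog e true A ->
  {in A &, forall u u', cequiv e u u' -> u = u'} ->
  {in A, forall u, ~~ cequiv e u v} -> #|A|.+1 <= tomega e.
Proof.
move=> sA hA injA nv.
have vA : v \notin A by apply/negP => /(subsetP sA); rewrite inE eirr.
have adj : forall u, u \in A -> e v u by move=> u /(subsetP sA); rewrite inE.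
have -> : #|A|.+1 = #|v |: A| by rewrite cardsU1 vA.
apply: tomega_ge.
  apply/cliqueP => x y; rewrite !in_setU1 => /predU1P[->|xA] /predU1P[->|yA];
    rewrite ?eqxx // => nxy.
  - exact: adj.
  - by rewrite esy; apply: adj.
  - by rewrite hA.
move=> x y; rewrite !in_setU1 => /predU1P[->|xA] /predU1P[->|yA] //.
- by rewrite cequiv_sym => ce; move: (nv y yA); rewrite ce.
- by move=> ce; move: (nv x xA); rewrite ce.
- exact: injA.
Qed.

Lemma tDelta_bound : tDelta e < 2 ^ (tomega e + (pB e).+1).
Proof.
have : forall C, C \in classes e -> qdeg e C < 2 ^ (tomega e + (pB e).+1).
  move=> C /classesP[v ->].
  pose Nbr := [set D in classes e | qadj e (eqclass e v) D].
  pose rep (D : {set T}) := odflt v [pick u in D | e v u].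
  have repP : forall D, D \in Nbr -> rep D \in D /\ e v (rep D).
    move=> D; rewrite inE => /andP[Dc /andP[nvD /exists_inP[x xv /exists_inP[y yD exy]]]].
    have evy : e v y.
      apply: (@cequiv_adj x) => //; first by rewrite -in_eqclass.
      apply: contraNneq nvD => yv; rewrite (class_mem Dc yD) yv //.
    rewrite /rep; case: pickP => [u /andP[]|] //.
    by move/(_ y); rewrite yD evy.
  have repC : forall D, D \in Nbr -> D = eqclass e (rep D).
    move=> D DN; apply: class_mem; last by case: (repP D DN).
    by move: DN; rewrite inE => /andP[].
  have repI : {in Nbr &, injective rep}.
    by move=> D1 D2 h1 h2 E; rewrite (repC D1 h1) (repC D2 h2) E.
  rewrite /qdeg -/Nbr -(card_in_imset repI).
  apply: contraTT isT; rewrite -leqNgt => big.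
  have sA : rep @: Nbr \subset [set u | e v u].
    by apply/subsetP => u /imsetP[D DN ->]; rewrite inE; case: (repP D DN).
  case: (ramsey esy big) => A AU [[ha hA]|[hb hA]].
    have sAv : A \subset [set u | e v u] := subset_trans AU sA.
    have : #|A|.+1 <= tomega e.
      apply: (clique_inequiv_tomega sAv hA).
        move=> u u' /(subsetP AU)/imsetP[D DN ->] /(subsetP AU)/imsetP[D' DN' ->].
        rewrite -eqclass_eq -(repC D DN) -(repC D' DN') => /eqP -> //.
      move=> u /(subsetP AU)/imsetP[D DN ->]; rewrite -eqclass_eq -(repC D DN).
      by move: DN; rewrite inE => /and3P[_ + _]; rewrite eq_sym.
    by rewrite ltnNge ha.
  have := star_of_indep (subset_trans AU sA) hA.
  by move/(leq_trans hb); rewrite ltnn.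
move=> H; have Xp : 0 < 2 ^ (tomega e + (pB e).+1) by rewrite expn_gt0.
rewrite -(prednK Xp) ltnS; apply/bigmax_leqP => C HC.
by rewrite -ltnS prednK //; apply: H.
Qed.


Lemma card_split (U : finType) (S : {set U}) (P : pred U) :
  #|[set x in S | P x]| + #|[set x in S | ~~ P x]| = #|S|.
Proof.
rewrite -(cardsID [set x | P x] S); congr (_ + _); apply: eq_card => x;
  by rewrite !inE andbC.
Qed.

Section Halving.
Variables (K V : {set T}) (x0 : T).
Hypothesis sep : forall u u', u \in V -> u' \in V -> u != u' ->
  exists z, z \notin K /\ e u z != e u' z.

Lemma halving L : forall S : {set T}, S \subset V -> 2 ^ L <= #|S| ->
  exists r c : nat -> T, exists d : nat -> bool, forall k, k < L ->
   [/\ r k \in S, c k \notin K, e (r k) (c k) = ~~ d k &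
       forall l, k < l -> l < L -> e (r l) (c k) = d k].
Proof.
elim: L => [|L IH] S sSV hS.
  by exists (fun _ => x0), (fun _ => x0), (fun _ => true).
have : 1 < #|S| by apply: leq_trans hS; rewrite expnS -{1}(muln1 2) leq_mul2l /= expn_gt0.
case/card_gt1P => u [u' [uS u'S nuu']].
case: (sep (subsetP sSV u uS) (subsetP sSV u' u'S) nuu') => z [zK nez].
pose Sb b := [set x in S | e x z == b].
have [b [hb [w [wS ew]]]] : exists b, 2 ^ L <= #|Sb b| /\ exists w, w \in S /\ e w z = ~~ b.
  have split := card_split S (fun x => e x z == true).
  have Hw : forall b, exists w, w \in S /\ e w z = ~~ b.
    move=> b; case: (eqVneq (e u z) (~~ b)) => [E|E]; first by exists u.
    by exists u'; split => //; move: nez E; case: (e u z); case: (e u' z); case: b.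
  case: (leqP (2 ^ L) #|Sb true|) => h; first by exists true.
  exists false; split => //.
  have -> : Sb false = [set x in S | ~~ (e x z == true)].
    by apply/setP => x; rewrite !inE; case: (e x z).
  move: hS split h; rewrite expnS /Sb; move: (2 ^ L) => q; lia.
have sSb : Sb b \subset V by apply/subsetP => x; rewrite inE => /andP[/(subsetP sSV)].
case: (IH (Sb b) sSb hb) => r [c [d H]].
exists (fun k => if k is k'.+1 then r k' else w).
exists (fun k => if k is k'.+1 then c k' else z).
exists (fun k => if k is k'.+1 then d k' else b).
case=> [|k] hk.
  split => //; case=> [|l] // _; rewrite ltnS => hl.
  by case: (H l hl) => /[swap] _; rewrite inE => /andP[_ /eqP].
rewrite ltnS in hk; case: (H k hk) => rS cK erc Hl; split => //.
  by move: rS; rewrite inE => /andP[].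
by case=> [|l] // ; rewrite !ltnS; apply: Hl.
Qed.

End Halving.


Section Pattern.
Variables (p : nat) (x y : nat -> T) (b be ga : bool).
Hypothesis hxx : forall i j, i < p -> j < p -> i != j -> e (x i) (x j).
Hypothesis hyy : forall i j, i < p -> j < p -> i != j -> e (y i) (y j) = ga.
Hypothesis hxy : forall i j, i < p -> j < p -> x i != y j.
Hypothesis hyi : forall i j, i < p -> j < p -> y i = y j -> i = j.
Hypothesis hd : forall i, i < p -> e (x i) (y i) = ~~ b.
Hypothesis hlow : forall i j, j < i -> i < p -> e (x i) (y j) = b.
Hypothesis hup : forall i j, i < j -> j < p -> e (x i) (y j) = be.

Lemma exy i j : i < p -> j < p ->
  e (x i) (y j) = if i == j then ~~ b else if j < i then b else be.
Proof.
move=> ip jp; case: (ltngtP i j) => [lij|lji|->]; [exact: hup | exact: hlow | exact: hd].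
Qed.

Lemma hxi i j : i < p -> j < p -> x i = x j -> i = j.
Proof.
move=> ip jp E; apply/eqP; apply: contraT => nij.
by move: (hxx ip jp nij); rewrite E eirr.
Qed.

Lemma XY_sub n (a : rel (XY n)) (f g : 'I_n -> nat) :
  (forall i, f i < p) -> (forall i, g i < p) ->
  (forall i j, f i = f j -> i = j) -> (forall i j, g i = g j -> i = j) ->
  (forall i j, a (inl i) (inl j) = (i != j)) ->
  (forall i j, a (inr i) (inr j) = ga && (i != j)) ->
  (forall i j, e (x (f i)) (y (g j)) = a (inl i) (inr j)) ->
  (forall i j, a (inr j) (inl i) = a (inl i) (inr j)) -> induced e a.
Proof.
move=> fp gp fi gi Hll Hrr Hlr Hsym.
apply: (@induced_XY n a (fun i => x (f i)) (fun j => y (g j))) => //.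
- by move=> i j /(hxi (fp i) (fp j)) /fi.
- by move=> i j /(hyi (gp i) (gp j)) /gi.
- by move=> i j; apply: hxy.
- move=> i j; rewrite Hll; case: (eqVneq i j) => [->|nij]; first by rewrite eirr.
  apply: hxx => //; by apply: contra nij => /eqP /fi ->.
- move=> i j; rewrite Hrr; case: (eqVneq i j) => [->|nij]; first by rewrite eirr andbF.
  rewrite andbT; apply: hyy => //; by apply: contra nij => /eqP /gi ->.
Qed.

End Pattern.

Lemma ord_eqE n (i j : 'I_n) : ((i : nat) == j) = (i == j).
Proof. by []. Qed.

Lemma pattern_bound (p : nat) (x y : nat -> T) (b be ga : bool) :
 (forall i j, i < p -> j < p -> i != j -> e (x i) (x j)) ->
 (forall i j, i < p -> j < p -> i != j -> e (y i) (y j) = ga) ->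
 (forall i j, i < p -> j < p -> x i != y j) ->
 (forall i j, i < p -> j < p -> y i = y j -> i = j) ->
 (forall i, i < p -> e (x i) (y i) = ~~ b) ->
 (forall i j, j < i -> i < p -> e (x i) (y j) = b) ->
 (forall i j, i < j -> j < p -> e (x i) (y j) = be) ->
 p.-1 <= pB e.
Proof.
move=> hxx hyy hxy hyi hd hlow hup.
have exy' := exy hd hlow hup.
have XYs := XY_sub hxx hyy hxy hyi.
case: (posnP p) => [->//|p0].
have ltp : forall i : 'I_p, i < p by move=> i; exact: ltn_ord.
have ltp1 : forall i : 'I_p.-1, i.+1 < p by move=> i; move: (ltn_ord i); lia.
have ltp0 : forall i : 'I_p.-1, i < p by move=> i; move: (ltn_ord i); lia.
have ord_inj : forall n (i j : 'I_n), (i : nat) = j -> i = j by move=> n i j; apply: val_inj.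
clear hd hlow hup; case: b exy' => exy; case: be exy => exy.
- (* b = true, be = true : i != j *)
  case: ga hyy XYs => hyy XYs.
  + apply: (leq_trans (leq_pred _)); apply: pB_AKK.
    apply: (@XYs _ _ (fun i => i) (fun i => i)); try exact: ord_inj; try done.
    move=> i j /=; rewrite (exy _ _ (ltp i) (ltp j)) /= ord_eqE; by case: (i == j); case: (j < i).
  + apply: pB_star; apply: (@induced_star _ (x 0) (fun j : 'I_p.-1 => y j.+1)).
    * by move=> i j /(hyi _ _ (ltp1 i) (ltp1 j)) [] /ord_inj.
    * by move=> j; apply: hxy.
    * by move=> j; rewrite exy.
    * move=> i j; case: (eqVneq i j) => [->|nij]; first by rewrite eirr.
      rewrite hyy //; apply: contra nij => /eqP [] /ord_inj ->; by [].
- (* b = true, be = false : j < i *)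
  case: ga hyy XYs => hyy XYs.
  + apply: pB_HKK.
    apply: (@XYs _ _ (fun i : 'I_p.-1 => p.-1 - i) (fun j : 'I_p.-1 => p.-1.-1 - j)).
    * move=> i /=; move: (ltn_ord i); lia.
    * move=> i /=; move: (ltn_ord i); lia.
    * move=> i j /= E; apply: ord_inj; move: (ltn_ord i) (ltn_ord j) E; lia.
    * move=> i j /= E; apply: ord_inj; move: (ltn_ord i) (ltn_ord j) E; lia.
    * by [].
    * by [].
    * move=> i j; move: (ltn_ord i) (ltn_ord j) => hi hj.
      rewrite exy /=; [|lia|lia].
      case: eqP => [|ne]; first by lia.
      case: ltnP => h1; apply/esym; [apply/idP|apply/negbTE/negP]; lia.
    * by [].
  + apply: pB_star; apply: (@induced_star _ (x p.-1) (fun j : 'I_p.-1 => y j)).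
    * by move=> i j /(hyi _ _ (ltp0 i) (ltp0 j)) /ord_inj.
    * by move=> j; apply: hxy; [lia | exact: ltp0].
    * move=> j; rewrite exy; [|lia|exact: ltp0].
      by rewrite (gtn_eqF (ltn_ord j)) ltn_ord.
    * move=> i j; case: (eqVneq i j) => [->|nij]; first by rewrite eirr.
      rewrite hyy //; apply: contra nij => /eqP /ord_inj ->; by [].
- (* b = false, be = true : i <= j *)
  case: ga hyy XYs => hyy XYs.
  + apply: (leq_trans (leq_pred _)); apply: pB_HKK.
    apply: (@XYs _ _ (fun i => i) (fun i => i)); try exact: ord_inj; try done.
    move=> i j /=; rewrite (exy _ _ (ltp i) (ltp j)) /= ord_eqE; case: eqP => [->|ne]; first by rewrite leqnn.
    by case: ltnP.
  + apply: (leq_trans (leq_pred _)); apply: pB_star.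
    apply: (@induced_star _ (x 0) (fun j : 'I_p => y j)).
    * by move=> i j /(hyi _ _ (ltp i) (ltp j)) /ord_inj.
    * by move=> j; apply: hxy.
    * by move=> j; rewrite exy //; case: eqP.
    * move=> i j; case: (eqVneq i j) => [->|nij]; first by rewrite eirr.
      rewrite hyy //; apply: contra nij => /eqP /ord_inj ->; by [].
- (* b = false, be = false : i == j *)
  case: ga hyy XYs => hyy XYs; apply: (leq_trans (leq_pred _)).
  + apply: pB_MKK.
    apply: (@XYs _ _ (fun i => i) (fun i => i)); try exact: ord_inj; try done.
    move=> i j /=; rewrite (exy _ _ (ltp i) (ltp j)) /= ord_eqE.
    by case: (i == j); case: (j < i).
  + apply: pB_MKI.
    apply: (@XYs _ _ (fun i => i) (fun i => i)); try exact: ord_inj; try done.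
    move=> i j /=; rewrite (exy _ _ (ltp i) (ltp j)) /= ord_eqE.
    by case: (i == j); case: (j < i).
Qed.


Lemma enum_sorted L (J : {set 'I_L}) : sorted (relpre val ltn) (enum J).
Proof.
apply: sorted_filter; first by move=> a b c /=; apply: ltn_trans.
by rewrite -enumT -sorted_map val_enum_ord; exact: iota_ltn_sorted.
Qed.

Lemma negb_neq (x : bool) : ~~ x = x -> False. Proof. by case: x. Qed.

Definition gA (q : nat) := 2 ^ (let p := q.+2 in let a1 := 2 ^ (p + p) in
  let N := 2 ^ (a1 + a1) in N + N).

Lemma no_big (K V : {set T}) : maxclique e K -> V \subset K ->
  (forall u u', u \in V -> u' \in V -> u != u' ->
     exists z, z \notin K /\ e u z != e u' z) ->
  #|V| < gA (pB e).
Proof.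
move=> mK sVK sep; rewrite ltnNge; apply/negP => big.
set p := (pB e).+2.
set a1 := 2 ^ (p + p).
set N := 2 ^ (a1 + a1).
set L := N + N.
have [x0 _] : exists x0 : T, true.
  case: (set_0Vmem V) => [V0|[x _]]; last by exists x.
  by move: big; rewrite V0 cards0 leqNgt expn_gt0.
case: (halving x0 sep (subxx V) big) => r [c [d Hh]].
have rK : forall k, k < L -> r k \in K.
  by move=> k kL; case: (Hh k kL) => /(subsetP sVK).
have cK : forall k, k < L -> c k \notin K by move=> k kL; case: (Hh k kL).
have rc : forall k, k < L -> e (r k) (c k) = ~~ d k by move=> k kL; case: (Hh k kL).
have rcl : forall k l, k < l -> l < L -> e (r l) (c k) = d k.
  by move=> k l kl lL; case: (Hh k (ltn_trans kl lL)) => _ _ _; apply.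
(* pigeonhole on d *)
have [b Ib] : exists b, N <= #|[set k : 'I_L | d k == b]|.
  have spl := card_split [set: 'I_L] (fun k : 'I_L => d k == true).
  rewrite cardsT card_ord in spl.
  case: (leqP N #|[set k in [set: 'I_L] | d k == true]|) => h1.
    by exists true; apply: (leq_trans h1); apply: subset_leq_card; apply/subsetP => k; rewrite !inE.
  exists false; have : N <= #|[set k in [set: 'I_L] | ~~ (d k == true)]| by move: spl h1; rewrite /L; lia.
  move/leq_trans; apply; apply: subset_leq_card; apply/subsetP => k; rewrite !inE.
  by case: (d k).
pose col1 (k l : 'I_L) := if k < l then e (r k) (c l) else e (r l) (c k).
have col1s : symmetric col1.
  move=> k l; rewrite /col1; case: (ltngtP k l) => // kl.
  by rewrite (val_inj kl).
case: (ramsey col1s Ib) => H HI HH.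
have [be [Hc Hh1]] : exists be, a1 <= #|H| /\ homog col1 be H.
  by case: HH => [[h1 h2]|[h1 h2]]; [exists true | exists false].
pose col2 (k l : 'I_L) := e (c k) (c l).
have col2s : symmetric col2 by move=> k l; rewrite /col2 esy.
case: (ramsey col2s Hc) => J JH JJ.
have [ga [Jc Jh]] : exists ga, p <= #|J| /\ homog col2 ga J.
  by case: JJ => [[h1 h2]|[h1 h2]]; [exists true | exists false].
have dJ : forall k, k \in J -> d k = b.
  by move=> k /(subsetP JH)/(subsetP HI); rewrite inE => /eqP.
have Lp : 0 < L by rewrite /L /N addn_gt0 expn_gt0.
pose k0 : 'I_L := Ordinal Lp.
pose h i := nth k0 (enum J) i.
have sz : p <= size (enum J) by rewrite -cardE.
have hJ : forall i, i < p -> h i \in J.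
  by move=> i ip; rewrite -mem_enum mem_nth // (leq_trans ip sz).
have hlt : forall i j, i < j -> j < p -> (h i : nat) < h j.
  move=> i j ij jp.
  have tr : transitive (relpre (val : 'I_L -> nat) ltn) by move=> a b0 c0 /=; apply: ltn_trans.
  have := sorted_ltn_nth tr k0 (enum_sorted J) => /(_ i j); rewrite !inE; apply.
  - by apply: leq_trans (leq_trans jp sz); apply: ltnW.
  - exact: leq_trans jp sz.
  - exact: ij.
have hL : forall i, (h i : nat) < L by move=> i; exact: ltn_ord.
have rdist : forall k l, k < l -> l < L -> r k != r l.
  move=> k l kl lL; apply/eqP => E.
  by move: (rc k (ltn_trans kl lL)) (rcl k l kl lL); rewrite E => ->; case: (d k).
have cdist : forall i j, i < j -> j < p -> c (h i) != c (h j).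
  move=> i j ij jp; apply/eqP => E.
  move: (rc _ (hL j)) (rcl _ _ (hlt i j ij jp) (hL j)).
  rewrite E (dJ _ (hJ j jp)) (dJ _ (hJ i (ltn_trans ij jp))) => ->; exact: negb_neq.
have hne : forall i j, i < j -> j < p -> h i != h j.
  by move=> i j ij jp; apply/eqP => E; move: (hlt i j ij jp); rewrite E ltnn.
suff : p.-1 <= pB e by rewrite /p /= ltnn.
apply: (@pattern_bound p (fun i => r (h i)) (fun i => c (h i)) b be ga).
- move=> i j ip jp nij; apply: (maxclique_adj mK); rewrite ?rK //.
  case: (ltngtP i j) => [ij|ji|ij]; first exact: rdist (hlt i j ij jp) (hL _).
    by rewrite eq_sym; exact: rdist (hlt j i ji ip) (hL _).
  by move: nij; rewrite ij eqxx.
- move=> i j ip jp nij; have := Jh (h i) (h j) (hJ i ip) (hJ j jp); apply.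
  case: (ltngtP i j) => [ij|ji|ij]; first exact: hne.
    by rewrite eq_sym; exact: hne.
  by move: nij; rewrite ij eqxx.
- move=> i j ip jp; apply/eqP => E; move: (cK _ (hL j)); rewrite -E.
  by rewrite rK.
- move=> i j ip jp E; case: (ltngtP i j) => [ij|ji|//].
    by move: (cdist i j ij jp); rewrite E eqxx.
  by move: (cdist j i ji ip); rewrite E eqxx.
- by move=> i ip; rewrite rc // dJ // hJ.
- move=> i j ji ip; rewrite rcl ?dJ ?hJ //; first exact: ltn_trans ji ip.
  exact: hlt.
- move=> i j ij jp; have := Hh1 (h i) (h j) (subsetP JH _ (hJ i (ltn_trans ij jp))) (subsetP JH _ (hJ j jp)).
  rewrite /col1 hlt // => <- //; exact: hne.
Qed.


Lemma sep1 K M u u' : maxclique e K -> maxclique e M -> u \in K -> u' \in K ->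
  u != u' -> u \in M -> u' \notin M -> exists z, z \notin K /\ e u z && ~~ e u' z.
Proof.
move=> mK mM uK u'K nuu' uM u'M.
case: (maxclique_out mM u'M) => z zM /andP[nzu' nezu'].
have euu' : e u u' := maxclique_adj mK uK u'K nuu'.
have nzu : z != u by apply: contraNneq nezu' => ->.
exists z; split.
  by apply: contra nezu' => zK; apply: (maxclique_adj mK).
by rewrite (maxclique_adj mM uM zM) ?(eq_sym u) // esy.
Qed.

Lemma tomega_bound : tomega e <= gA (pB e).
Proof.
apply/bigmax_leqP => K mK; apply: ltnW.
change (#|Acl K| < gA (pB e)).
case: (set_0Vmem (Acl K)) => [->|[D0 D0A]]; first by rewrite cards0 /gA expn_gt0.
have [x0 _] : exists x0 : T, true.
  by move: D0A; rewrite inE => /andP[_ /set0Pn[x _]]; exists x.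
pose rep (D : {set T}) := odflt x0 [pick u in D :&: K].
have repP : forall D, D \in Acl K -> rep D \in D :&: K.
  move=> D; rewrite inE => /andP[_ /set0Pn[u uDK]]; rewrite /rep.
  by case: pickP => [v //|/(_ u)]; rewrite uDK.
have repC : forall D, D \in Acl K -> D = eqclass e (rep D).
  move=> D DA; apply: class_mem; first by move: DA; rewrite inE => /andP[].
  by move: (repP D DA); rewrite inE => /andP[].
have repI : {in Acl K &, injective rep}.
  by move=> D D' h h' E; rewrite (repC D h) (repC D' h') E.
rewrite -(card_in_imset repI); apply: (no_big mK).
  by apply/subsetP => u /imsetP[D DA ->]; move: (repP D DA); rewrite inE => /andP[].
move=> u u' /imsetP[D DA ->] /imsetP[D' DA' ->] nuu'.
have uK : rep D \in K by move: (repP D DA); rewrite inE => /andP[].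
have u'K : rep D' \in K by move: (repP D' DA'); rewrite inE => /andP[].
have nce : ~~ cequiv e (rep D) (rep D').
  apply: contra nuu' => ce; rewrite (repC D DA) (repC D' DA').
  by move: ce; rewrite -eqclass_eq => /eqP ->.
case: (cequivN nce) => M mM.
case: (boolP (rep D \in M)) => uM /=.
  move=> u'M; have u'M' : rep D' \notin M by move: u'M; case: (rep D' \in M).
  case: (sep1 mK mM uK u'K nuu' uM u'M') => z [zK /andP[h1 h2]].
  by exists z; split => //; rewrite h1 (negbTE h2).
move=> u'M; have u'M' : rep D' \in M by move: u'M; case: (rep D' \in M).
case: (sep1 mK mM u'K uK _ u'M' uM) => [|z [zK /andP[h1 h2]]].
  by rewrite eq_sym.
by exists z; split => //; rewrite h1 (negbTE h2).
Qed.

End Basic.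

Definition gD (q : nat) := 2 ^ (gA q + q.+1).

Lemma facts (T : finType) (e : rel T) : symmetric e -> irreflexive e ->
 [/\ pB e <= maxn (alpha_star e) (tomega e), alpha_star e <= theta_star e,
   theta_star e <= cideg e, alpha_star e <= (tDelta e).+1 &
   tomega e <= (tDelta e).+1] /\
 [/\ cideg e <= (cdeg e).+1, tomega e <= 2 ^ cdeg e,
   cdeg e <= tomega e * cideg e & tDelta e <= gD (pB e)] /\
 (cideg e <= 2 ^ gD (pB e) /\ tomega e <= gA (pB e)).
Proof.
move=> es ei.
have W : tomega e <= gA (pB e) by apply: tomega_bound.
have DB : tDelta e <= gD (pB e).
  apply: ltnW; apply: leq_trans (_ : _ <= 2 ^ (tomega e + (pB e).+1)) _.
    by apply: tDelta_bound.
  by rewrite leq_pexp2l // leq_add2r.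
split; [split|split; [split|split]].
- by apply: pB_upper.
- by apply: alpha_theta_star.
- by apply: theta_cideg.
- by apply: alpha_tDelta.
- by apply: tomega_tDelta.
- by apply: cideg_cdeg.
- by apply: tomega_cdeg.
- by apply: cdeg_le.
- exact: DB.
- apply: leq_trans (_ : _ <= 2 ^ tDelta e) _; first by apply: cideg_tDelta.
  by rewrite leq_pexp2l.
- exact: W.
Qed.

Theorem corollary7p6 :
  param_equiv pB tDelta /\
  param_equiv pB cdeg /\
  param_equiv pB (fun T e => maxn (cideg e) (tomega e)) /\
  param_equiv pB (fun T e => maxn (alpha_star e) (tomega e)) /\
  param_equiv pB (fun T e => maxn (theta_star e) (tomega e)).
Proof.
split; [|split; [|split; [|split]]].
- exists (fun x => x.+1), gD => T e es ei.
  have [[UB at_ tc aD wD] [[cc wc cdl DB] [CB W]]] := facts es ei; split => //.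
  by apply: leq_trans UB _; rewrite geq_max aD wD.
- exists (fun x => x.+2 + 2 ^ x), (fun q => gA q * 2 ^ gD q) => T e es ei.
  have [[UB at_ tc aD wD] [[cc wc cdl DB] [CB W]]] := facts es ei; split.
    apply: leq_trans UB _; rewrite geq_max; apply/andP; split.
      apply: leq_trans at_ _; apply: leq_trans tc _.
      by apply: leq_trans cc _; apply: leq_trans (leq_addr _ _).
    by apply: leq_trans wc (leq_addl _ _).
  by apply: leq_trans cdl _; apply: leq_mul.
- exists id, (fun q => maxn (2 ^ gD q) (gA q)) => T e es ei.
  have [[UB at_ tc aD wD] [[cc wc cdl DB] [CB W]]] := facts es ei; split.
    apply: leq_trans UB _; rewrite geq_max leq_maxr andbT.
    apply: leq_trans at_ _; apply: leq_trans tc _; exact: leq_maxl.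
  by rewrite geq_max !leq_max CB W orbT.
- exists id, (fun q => maxn (2 ^ gD q) (gA q)) => T e es ei.
  have [[UB at_ tc aD wD] [[cc wc cdl DB] [CB W]]] := facts es ei; split => //.
  rewrite geq_max !leq_max W orbT andbT.
  by rewrite (leq_trans at_ (leq_trans tc CB)).
- exists id, (fun q => maxn (2 ^ gD q) (gA q)) => T e es ei.
  have [[UB at_ tc aD wD] [[cc wc cdl DB] [CB W]]] := facts es ei; split.
    apply: leq_trans UB _; rewrite geq_max leq_maxr andbT.
    apply: leq_trans at_ _; exact: leq_maxl.
  rewrite geq_max !leq_max W orbT andbT.
  by rewrite (leq_trans tc CB).
Qed.
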